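(* For every $k$ with $t\le k\le n$, the probability that the reverse reachable set of $B$ has exactly $k$ vertices equals $\alpha_k$, and \[ \alpha_k \le n^x \cdot \max_{\substack{\sum_i k_i = k,\ t_i\le k_i\le a_i}} a_{k_1,\dots,k_x}. \]
   Context: Random graph model: $V$ is a set of $n$ vertices, $B\subseteq V$ a target set with $|B|=t$, each $v\in V$ has a prescribed out-degree $d_v$ with $1\le d_{\min}\le d_v\le d_{\max}$ (constants), and for each $v$ independently its out-neighbour set is chosen uniformly among all $d_v$-element subsets of $V$. Let $d_1,\dots,d_x$ be the distinct out-degrees, $a_i$ the number of vertices of out-degree $d_i$, $t_i$ the number of vertices of $B$ of out-degree $d_i$. The reverse reachable set of $B$ is the set of vertices having a directed path to a vertex of $B$. For $S\supseteq B$ containing $k_i$ vertices of out-degree $d_i$, $R(k_1,\dots,k_x)$ is the probability that every vertex of $S$ has a directed path to $B$ inside $S$. For $k=\sum_i k_i$ with $t_i\le k_i\le a_i$, define $a_{k_1,\dots,k_x}=\left(\prod_{i=1}^x\binom{a_i-t_i}{k_i-t_i}\left(\binom{n-k}{d_i}/\binom{n}{d_i}\right)^{a_i-k_i}\right)R(k_1,\dots,k_x)$, where the factor $(\binom{n-k}{d_i}/\binom{n}{d_i})^{a_i-k_i}$ is taken to be $1$ when $a_i=k_i$, and $\alpha_k=\sum_{\sum_i k_i=k,\ t_i\le k_i\le a_i} a_{k_1,\dots,k_x}$. *)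

(* Defs.v *)
From mathcomp Require Import all_boot all_order all_algebra.
Set Implicit Arguments. Unset Strict Implicit. Unset Printing Implicit Defensive.
Import Order.TTheory GRing.Theory Num.Theory.
Local Open Scope ring_scope.

Section Model.
Variables (V : finType) (B : {set V}) (d : V -> nat).

(* a configuration assigns to each vertex its out-neighbour set *)
Definition cfg := {ffun V -> {set V}}.
Definition good (N : cfg) : bool := [forall v, #|N v| == d v].
(* independent uniform choices = uniform distribution on good configurations *)
Definition prob (E : pred cfg) : rat :=
  (#|[set N | good N && E N]|)%:R / (#|[set N | good N]|)%:R.

(* reverse reachable set of B (length-0 paths allowed, so B is included) *)
Definition rr (N : cfg) : {set V} :=
  [set v | [exists b in B, connect (fun u w => w \in N u) v b]].

Definition reach_inside (S : {set V}) (N : cfg) : bool :=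
  [forall v in S, [exists b in B,
     connect (fun u w => [&& u \in S, w \in S & w \in N u]) v b]].

Definition degs : seq nat := undup [seq d v | v <- enum V].
Definition ndeg : nat := size degs.
Definition degi (i : 'I_ndeg) : nat := nth 0%N degs i.
Definition acount (i : 'I_ndeg) : nat := #|[set v | d v == degi i]|.
Definition tcount (i : 'I_ndeg) : nat := #|[set v in B | d v == degi i]|.

Definition kvec := {ffun 'I_ndeg -> 'I_(#|V|.+1)}.

Definition has_counts (kv : kvec) (S : {set V}) : bool :=
  (B \subset S) && [forall i, #|[set v in S | d v == degi i]| == (kv i : nat)].

(* R(k_1,...,k_x): the probability for some (any) S with those counts *)
Definition Rk (kv : kvec) : rat :=
  if [pick S | has_counts kv S] is Some S0 then prob (reach_inside S0) else 0.

Definition ksum (kv : kvec) : nat := (\sum_i (kv i : nat))%N.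

Definition admissible (k : nat) (kv : kvec) : bool :=
  (ksum kv == k) && [forall i, (tcount i <= kv i <= acount i)%N].

Definition acoef (kv : kvec) : rat :=
  (\prod_i (('C(acount i - tcount i, kv i - tcount i))%:R *
      (('C(#|V| - ksum kv, degi i))%:R / ('C(#|V|, degi i))%:R)
        ^+ (acount i - kv i))) * Rk kv.

Definition alpha (k : nat) : rat := \sum_(kv : kvec | admissible k kv) acoef kv.

Definition amax (k : nat) : rat :=
  \big[Num.max/0]_(kv : kvec | admissible k kv) acoef kv.

End Model.

(* Main.v *)
Require Import Defs.
From mathcomp Require Import all_boot all_order all_algebra.
Set Implicit Arguments. Unset Strict Implicit. Unset Printing Implicit Defensive.
Import Order.TTheory GRing.Theory Num.Theory.

Section Graph.
Variables (V : finType) (B : {set V}).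

Definition Qout (S : {set V}) (N : cfg V) : bool :=
  [forall v in ~: S, [disjoint N v & S]].

Lemma rr_char (N : cfg V) (S : {set V}) :
  (rr B N == S) = [&& B \subset S, reach_inside B S N & Qout S N].
Proof.
set e := fun u w => w \in N u.
set eS := fun u w => [&& u \in S, w \in S & w \in N u].
apply/eqP/and3P.
- move=> <-; split.
  + apply/subsetP => b Hb; rewrite inE; apply/existsP; exists b.
    by rewrite Hb connect0.
  + apply/forallP => v; apply/implyP; rewrite inE => /existsP[b /andP[Hb Hc]].
    apply/existsP; exists b; rewrite Hb /=.
    move: Hc => /connectP[p Hp Hl].
    elim: p v Hp Hl => [|w p IH] v /=; first by move=> _ ->; exact: connect0.
    move=> /andP[Hvw Hp] Hl.
    apply: (connect_trans (y := w)); last exact: IH.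
    apply: connect1; rewrite /= Hvw andbT; apply/andP; split; rewrite inE;
      apply/existsP; exists b; rewrite Hb /=.
    * by apply/connectP; exists (w :: p) => //=; rewrite Hvw.
    * by apply/connectP; exists p.
  + apply/forallP => v; apply/implyP; rewrite !inE => Hv.
    apply/pred0P => w /=; apply/negbTE/negP => /andP[Hw]; rewrite inE.
    move=> /existsP[b /andP[Hb Hc]]; apply: (negP Hv).
    apply/existsP; exists b; rewrite Hb /=.
    by apply: (connect_trans (y := w)) => //; apply: connect1.
- move=> [HB Hr Hq]; apply/setP => v; rewrite inE; apply/idP/idP.
  + move=> /existsP[b /andP[Hb /connectP[p Hp Hl]]].
    have HbS : b \in S by apply: (subsetP HB).
    rewrite {}Hl in HbS.
    elim: p v Hp HbS => [|w p IH] v //= /andP[Hvw Hp] Hl.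
    apply/negPn/negP => Hv.
    have Hw : w \notin S.
      move/forallP: Hq => /(_ v); rewrite inE Hv /= => /pred0P /(_ w) /=.
      by rewrite Hvw /= => ->.
    by move: (IH w Hp Hl); rewrite (negbTE Hw).
  + move=> HvS; move/forallP: Hr => /(_ v); rewrite HvS /=.
    move=> /existsP[b /andP[Hb Hc]]; apply/existsP; exists b; rewrite Hb /=.
    apply: (connect_sub _ Hc) => x y /and3P[_ _ Hxy]; exact: connect1.
Qed.
End Graph.
Section Indep.
Variables (V : finType) (d : V -> nat) (S : {set V}).

Definition merge (N M : cfg V) : cfg V := [ffun v => if v \in S then N v else M v].

Lemma merge_good N M : good d N -> good d M -> good d (merge N M).
Proof.
move=> /forallP HN /forallP HM; apply/forallP => v; rewrite ffunE.
by case: ifP.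
Qed.

Lemma merge_invol N M : merge (merge N M) (merge M N) = N.
Proof. by apply/ffunP => v; rewrite !ffunE; case: (v \in S). Qed.

Lemma indep_card (P Q : pred (cfg V)) :
  (forall N M, P (merge N M) = P N) -> (forall N M, Q (merge N M) = Q M) ->
  (#|[set N | good d N && (P N && Q N)]| * #|[set N | good d N]| =
   #|[set N | good d N && P N]| * #|[set N | good d N && Q N]|)%N.
Proof.
move=> hP hQ.
pose phi (NM : cfg V * cfg V) := (merge NM.1 NM.2, merge NM.2 NM.1).
have phiK : involutive phi by case=> N M; rewrite /phi /= !merge_invol.
have inj : injective phi := inv_inj phiK.
rewrite -!cardsX -(card_imset _ inj); apply: eq_card => -[N M].
apply/imsetP/idP.
- case=> -[N' M']; rewrite !inE /= => /andP[/andP[gN /andP[pN qN]] gM'] [-> ->].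
  by rewrite !merge_good // hP hQ pN qN.
- rewrite !inE /= => /andP[/andP[gN pN] /andP[gM qM]].
  exists (phi (N, M)); last by rewrite phiK.
  by rewrite !inE /= !merge_good // hP pN hQ qM.
Qed.
End Indep.
Lemma card_fam (V T : finType) (F : V -> pred T) :
  #|[set N : {ffun V -> T} | [forall v, F v (N v)]]| = (\prod_v #|F v|)%N.
Proof.
have := card_family F; rewrite foldrE big_image => <-.
apply: eq_card => N; rewrite inE; apply/forallP/familyP => H v; exact: H.
Qed.

Local Open Scope ring_scope.
Section Prob.
Variables (V : finType) (B : {set V}) (d : V -> nat).
Hypothesis dle : forall v, (d v <= #|V|)%N.


Lemma card_good : #|[set N | good d N]| = (\prod_v 'C(#|V|, d v))%N.
Proof.
have -> : [set N | good d N] = [set N : cfg V | [forall v, (fun v (s : {set V}) => #|s| == d v) v (N v)]]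
  by apply/setP=> N; rewrite !inE.
rewrite (card_fam (fun v (s : {set V}) => #|s| == d v)); apply: eq_bigr => v _; rewrite -card_draws; apply: eq_card => s; by rewrite inE.
Qed.

Lemma card_good_Q S : #|[set N | good d N && Qout S N]| =
   (\prod_v (if v \in S then 'C(#|V|, d v) else 'C(#|V| - #|S|, d v)))%N.
Proof.
have -> : [set N | good d N && Qout S N] = [set N : cfg V | [forall v, (fun v (s : {set V}) => (#|s| == d v) && ((v \in S) || [disjoint s & S])) v (N v)]].
  apply/setP => N; rewrite !inE; apply/andP/forallP.
    move=> [/forallP H1 /forallP H2] v; rewrite H1 /=; have := H2 v.
    by rewrite inE; case: (v \in S).
  move=> H; split; apply/forallP => v; have /andP[H1 H2] := H v => //.
  by rewrite inE; apply/implyP => Hv; move: H2; rewrite (negbTE Hv).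
rewrite (card_fam (fun v (s : {set V}) => (#|s| == d v) && ((v \in S) || [disjoint s & S]))); apply: eq_bigr => v _; case: ifP => Hv.
  by rewrite -card_draws; apply: eq_card => s; rewrite !inE -topredE /= andbT.
rewrite -(cardsC S) addKn -cards_draws; apply: eq_card => s.
by rewrite !inE -topredE /= disjoints_subset andbC.
Qed.

Lemma probQ S : prob d (Qout S) =
  \prod_(v in ~: S) (('C(#|V| - #|S|, d v))%:R / ('C(#|V|, d v))%:R).
Proof.
rewrite /prob.
rewrite card_good_Q card_good !natr_prod -prodfV -big_split /=.
rewrite [RHS]big_mkcond /=; apply: eq_bigr => v _; rewrite inE.
case: ifP => Hv //=; rewrite divff // pnatr_eq0 -lt0n bin_gt0; exact: dle.
Qed.

Lemma card_good_gt0 : (0 < #|[set N | good d N]|)%N.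
Proof. by rewrite card_good prodn_cond_gt0 // => v _; rewrite bin_gt0. Qed.

Lemma probE (P : pred (cfg V)) :
  prob d P = (#|[set N | good d N && P N]|)%:R / (#|[set N | good d N]|)%:R.
Proof. by []. Qed.

Lemma prob_part (J : finType) (f : cfg V -> J) (Qj : pred J) (P : pred (cfg V)) :
  (forall N, P N = Qj (f N)) ->
  prob d P = \sum_(j | Qj j) prob d (fun N => f N == j).
Proof.
move=> HP; rewrite /prob -mulr_suml; congr (_ * _).
rewrite -sum1_card (partition_big f Qj) /=; last by move=> N; rewrite inE => /andP[_]; rewrite HP.
rewrite natr_sum; apply: eq_bigr => j Hj; rewrite -sum1_card; congr (_ %:R).
apply: eq_bigl => N; rewrite !inE HP; case: eqP => [->|]; by rewrite ?Hj ?andbT ?andbF.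
Qed.

Lemma prob_indep S (P Q : pred (cfg V)) :
  (forall N M, P (merge S N M) = P N) -> (forall N M, Q (merge S N M) = Q M) ->
  prob d (fun N => P N && Q N) = prob d P * prob d Q.
Proof.
move=> hP hQ; have H := indep_card d hP hQ.
have G0 : (#|[set N | good d N]|)%:R != 0 :> rat by rewrite pnatr_eq0 -lt0n card_good_gt0.
have H' : (#|[set N | good d N && (P N && Q N)]|)%:R * (#|[set N | good d N]|)%:R =
  (#|[set N | good d N && P N]|)%:R * (#|[set N | good d N && Q N]|)%:R :> rat by rewrite -!natrM H.
rewrite /prob; move: H' G0.
set a := (#|_|)%:R; set g := (#|_|)%:R; set p := (#|_|)%:R; set q := (#|_|)%:R.
move=> H' G0; rewrite mulrACA -invfM -H' invfM mulrA mulfK //.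
Qed.

Lemma reach_merge (S : {set V}) (N M : cfg V) : reach_inside B S (merge S N M) = reach_inside B S N.
Proof.
rewrite /reach_inside; apply: eq_forallb => v; congr (_ ==> _).
apply: eq_existsb => b; congr (_ && _); apply: eq_connect => x y.
by rewrite ffunE; case: (x \in S).
Qed.

Lemma Qout_merge (S : {set V}) (N M : cfg V) : Qout S (merge S N M) = Qout S M.
Proof.
rewrite /Qout; apply: eq_forallb => v; rewrite ffunE inE.
by case: (v \in S).
Qed.

Lemma prob0 : prob d (fun _ => false) = 0.
Proof.
rewrite /prob (_ : [set N | good d N & false] = set0) ?cards0 ?mul0r //.
by apply/setP => N; rewrite !inE andbF.
Qed.

Lemma prob_ext (P Q : pred (cfg V)) : P =1 Q -> prob d P = prob d Q.
Proof.
by move=> H; rewrite /prob; congr (_%:R / _); apply: eq_card => N; rewrite !inE H.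
Qed.

Lemma prob_rrS (S : {set V}) : prob d (fun N => rr B N == S) =
  if B \subset S then prob d (reach_inside B S) * prob d (Qout S) else 0.
Proof.
rewrite (prob_ext (Q := fun N => (B \subset S) && (reach_inside B S N && Qout S N))); last first.
  by move=> N; rewrite rr_char.
case: ifP => HB; last by rewrite -prob0; apply: prob_ext.
rewrite -(prob_indep (S := S)) //; last by move=> N M; rewrite Qout_merge.
by move=> N M; rewrite reach_merge.
Qed.
End Prob.
Close Scope ring_scope.

Lemma exists_match (T : finType) (K : eqType) (f g : T -> K) :
  (forall c, #|[set v | f v == c]| = #|[set v | g v == c]|) ->
  exists2 s : T -> T, injective s & forall v, g (s v) = f v.
Proof.
move=> Hc.
pose F v := enum [set w | f w == f v]; pose G v := enum [set w | g w == f v].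
pose s v := nth v (G v) (index v (F v)).
have inF v : v \in F v by rewrite mem_enum inE.
have szFG v : size (F v) = size (G v) by rewrite -!cardE Hc.
have ltv v : (index v (F v) < size (G v))%N by rewrite -szFG index_mem.
have gs v : g (s v) = f v.
  have := mem_nth v (ltv v); rewrite mem_enum inE => /eqP; done.
exists s => // v w Hvw.
have fvw : f v = f w by rewrite -gs Hvw gs.
have HF : F v = F w by rewrite /F fvw.
have HG : G v = G w by rewrite /G fvw.
have l1 := ltv v; have l2 := ltv w; rewrite HG in l1.
move: Hvw; rewrite /s HG (set_nth_default w v l1) => /eqP.
rewrite nth_uniq ?enum_uniq // => /eqP Hi.
have Hw : w \in F v by rewrite HF inF.
by rewrite -(nth_index v (inF v)) Hi -HF nth_index.
Qed.

Section Trans.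
Variables (V : finType) (B : {set V}) (d : V -> nat).

Lemma connect_map (e e' : rel V) (s : V -> V) :
  (forall x y, e x y -> e' (s x) (s y)) ->
  forall x y, connect e x y -> connect e' (s x) (s y).
Proof.
move=> H x y /connectP[p Hp ->]; elim: p x Hp => [|z p IH] x /=; first by move=> _; exact: connect0.
move=> /andP[Hxz Hp]; apply: (connect_trans (y := s z)); first exact/connect1/H.
exact: IH.
Qed.

Lemma reach_le (S S' : {set V}) (s : V -> V) (inj : injective s) :
  (forall x, d (s x) = d x) -> (forall x, (s x \in B) = (x \in B)) ->
  (forall x, (s x \in S') = (x \in S)) ->
  (#|[set N | good d N && reach_inside B S N]| <= #|[set N | good d N && reach_inside B S' N]|)%N.
Proof.
move=> hd hB hS.
pose tr (N : cfg V) : cfg V := [ffun v => s @: N (invF inj v)].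
have trE N x : tr N (s x) = s @: N x by rewrite ffunE invF_f.
have trinj : injective tr.
  move=> N M H; apply/ffunP => x; apply: (imset_inj inj); by rewrite -!trE H.
rewrite -(card_imset _ trinj); apply: subset_leq_card; apply/subsetP => _ /imsetP[N HN ->].
move: HN; rewrite !inE => /andP[/forallP gN /forallP rN]; apply/andP; split.
  apply/forallP => v; rewrite -(f_invF inj v) trE card_imset // hd; exact: gN.
apply/forallP => v; apply/implyP; rewrite -(f_invF inj v) hS => Hv.
have /existsP[b /andP[Hb Hc]] := implyP (rN (invF inj v)) Hv.
apply/existsP; exists (s b); rewrite hB Hb /=.
apply: connect_map Hc => x y /and3P[Hx Hy Hxy].
by rewrite !hS Hx Hy trE mem_imset.
Qed.
End Trans.

Section Deg.
Variables (V : finType) (B : {set V}) (d : V -> nat).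

Lemma d_in_degs v : d v \in degs d.
Proof. by rewrite mem_undup; apply: map_f; rewrite mem_enum. Qed.

Definition degidx (v : V) : 'I_(ndeg d) :=
  @Ordinal (ndeg d) (index (d v) (degs d)) (etrans (index_mem _ _) (d_in_degs v)).

Lemma degi_idx v : @degi _ d (degidx v) = d v.
Proof. by rewrite /degi /= nth_index // d_in_degs. Qed.

Lemma degidxP v i : (d v == @degi _ d i) = (degidx v == i).
Proof.
apply/eqP/eqP => [H|<-]; last by rewrite degi_idx.
apply: val_inj => /=; rewrite H /degi index_uniq //; exact: undup_uniq.
Qed.

Lemma counts_eq (kv : kvec d) (S S' : {set V}) : has_counts B kv S -> has_counts B kv S' ->
  forall a, #|[set v in S | d v == a]| = #|[set v in S' | d v == a]|.
Proof.
move=> /andP[_ /forallP H] /andP[_ /forallP H'] a.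
case: (boolP [exists v, d v == a]) => [/existsP[v /eqP Hv] | Hn].
  subst a; rewrite -degi_idx.
  by rewrite (eqP (H (degidx v))) (eqP (H' (degidx v))).
have E0 T : [set v in T | d v == a] = set0.
  apply/setP => v; rewrite !inE; case: eqP => [E|_]; rewrite ?andbT ?andbF //.
  by case/negP: Hn; apply/existsP; exists v; rewrite E.
by rewrite !E0.
Qed.

Definition cls (S : {set V}) (c : nat * bool * bool) :=
  #|[set v | (d v, v \in B, v \in S) == c]|.

Lemma cls_formula (S : {set V}) a b c : B \subset S ->
  cls S (a, b, c) = if b then (if c then #|[set v in B | d v == a]| else 0)
    else (if c then #|[set v in S | d v == a]| - #|[set v in B | d v == a]|
          else #|[set v | d v == a]| - #|[set v in S | d v == a]|).
Proof.
move=> /subsetP HB; rewrite /cls; case: b; case: c.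
- by apply: eq_card => v; rewrite !inE !xpair_eqE; case: (boolP (v \in B)) => [/HB ->|]; rewrite ?andbT ?andbF.
- apply/eqP; rewrite cards_eq0; apply/eqP/setP => v; rewrite !inE !xpair_eqE.
  by case: (boolP (v \in B)) => [/HB ->|]; rewrite ?andbT ?andbF.
- have -> : [set v | (d v, v \in B, v \in S) == (a, false, true)] =
     [set v in S | d v == a] :\: [set v in B | d v == a].
    by apply/setP => v; rewrite !inE !xpair_eqE; case: (v \in B); case: (v \in S); case: (d v == a).
  rewrite cardsD (setIidPr _) //; apply/subsetP => v; rewrite !inE => /andP[Hv ->].
  by rewrite (HB _ Hv).
- have -> : [set v | (d v, v \in B, v \in S) == (a, false, false)] =
     [set v | d v == a] :\: [set v in S | d v == a].
    apply/setP => v; rewrite !inE !xpair_eqE.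
    by case: (boolP (v \in B)) => [/HB ->|]; case: (v \in S); case: (d v == a).
  rewrite cardsD (setIidPr _) //; apply/subsetP => v; rewrite !inE => /andP[_ ->].
  by [].
Qed.

Lemma Rk_eq (kv : kvec d) (S : {set V}) : has_counts B kv S -> Rk B kv = prob d (reach_inside B S).
Proof.
move=> HS; rewrite /Rk; case: pickP => [S0 H0 | Hn]; last by rewrite Hn in HS.
have B0 : B \subset S0 by case/andP: H0.
have B1 : B \subset S by case/andP: HS.
have HC := counts_eq H0 HS.
have key : forall c, cls S0 c = cls S c.
  by case=> [[a b] c]; rewrite !cls_formula // HC.
rewrite /prob; congr (_%:R / _)%R; apply/eqP; rewrite eqn_leq; apply/andP; split.
  have [s inj Hs] := exists_match (f := fun v => (d v, v \in B, v \in S0))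
                      (g := fun v => (d v, v \in B, v \in S)) key.
  apply: (reach_le inj) => x; case: (Hs x) => h1 h2 h3; by rewrite ?h1 ?h2 ?h3.
have [s inj Hs] := exists_match (f := fun v => (d v, v \in B, v \in S))
                    (g := fun v => (d v, v \in B, v \in S0)) (fun c => esym (key c)).
apply: (reach_le inj) => x; case: (Hs x) => h1 h2 h3; by rewrite ?h1 ?h2 ?h3.
Qed.
End Deg.

Section Count.
Variables (V : finType) (B : {set V}) (d : V -> nat).

Notation di := (@degi V d).

Definition cnt (S : {set V}) (i : 'I_(ndeg d)) := #|[set v in S | d v == di i]|.

Definition kvof (S : {set V}) : kvec d := [ffun i => inord (cnt S i)].

Lemma kvofE (S : {set V}) i : (kvof S i : nat) = cnt S i.
Proof.
rewrite ffunE inordK // ltnS; rewrite /cnt; apply: leq_trans (max_card _) _; by [].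
Qed.

Lemma sum_cnt (S : {set V}) : (\sum_i cnt S i)%N = #|S|.
Proof.
rewrite -sum1_card (partition_big (@degidx V d) xpredT) //=.
apply: eq_bigr => i _; rewrite /cnt -sum1_card; apply: eq_bigl => v.
by rewrite !inE degidxP.
Qed.

Lemma ksum_kvof (S : {set V}) : ksum (kvof S) = #|S|.
Proof. by rewrite /ksum -sum_cnt; apply: eq_bigr => i _; rewrite kvofE. Qed.

Lemma has_counts_kvof (S : {set V}) : B \subset S -> has_counts B (kvof S) S.
Proof. move=> HB; rewrite /has_counts HB; apply/forallP => i; apply/eqP; symmetry; exact: kvofE. Qed.

Lemma has_counts_eq (kv : kvec d) (S : {set V}) : has_counts B kv S -> kvof S = kv.
Proof.
move=> /andP[_ /forallP H]; apply/ffunP => i; apply: val_inj.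
apply: etrans (kvofE S i) _; exact/eqP/H.
Qed.

Lemma admissible_kvof k (S : {set V}) : B \subset S -> admissible B k (kvof S) = (#|S| == k).
Proof.
move=> HB; rewrite /admissible ksum_kvof; case: (#|S| == k) => //=.
apply/forallP => i; apply/andP; split; apply: (leq_trans _ (leq_trans (leqnn _) _));
  rewrite ?kvofE; try exact: leqnn.
  apply: subset_leq_card; apply/subsetP => v; rewrite !inE => /andP[Hv ->].
  by rewrite (subsetP HB).
by apply: subset_leq_card; apply/subsetP => v; rewrite !inE => /andP[_ ->].
Qed.

Definition Ci (i : 'I_(ndeg d)) := [set v | (v \notin B) && (d v == di i)].

Lemma card_Ci i : #|Ci i| = (acount i - tcount B i)%N.
Proof.
have E1 : [set v | d v == di i] :&: B = [set v in B | d v == di i].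
  by apply/setP => v; rewrite !inE andbC.
rewrite /acount /tcount -(cardsID B [set v | d v == di i]) E1 addKn.
by apply: eq_card => v; rewrite !inE andbC.
Qed.

Lemma cnt_split (S : {set V}) i : B \subset S ->
  cnt S i = (tcount B i + #|S :&: Ci i|)%N.
Proof.
move=> HB; rewrite /cnt /tcount -(cardsID B [set v in S | d v == di i]).
have -> : [set v in S | d v == di i] :&: B = [set v in B | d v == di i].
  apply/setP => v; rewrite !inE; case: (boolP (v \in B)) => [Hv|]; rewrite ?andbT ?andbF //.
  by rewrite (subsetP HB).
have -> : [set v in S | d v == di i] :\: B = S :&: Ci i.
  by apply/setP => v; rewrite !inE; case: (v \in B); case: (v \in S).
by [].
Qed.


Lemma card_Sset (kv : kvec d) : (forall i, tcount B i <= kv i)%N ->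
  #|[set S : {set V} | (B \subset S) && (kvof S == kv)]| =
  (\prod_i 'C(acount i - tcount B i, kv i - tcount B i))%N.
Proof.
move=> Ht.
pose Phi (S : {set V}) : {ffun 'I_(ndeg d) -> {set V}} := [ffun i => S :&: Ci i].
pose Fam i (T : {set V}) := (T \subset Ci i) && (#|T| == kv i - tcount B i).
have CiP (v : V) : v \notin B -> v \in Ci (degidx d v).
  by move=> Hv; rewrite /Ci inE Hv /= degi_idx.
have inj : {in [set S : {set V} | (B \subset S) && (kvof S == kv)] &, injective Phi}.
  move=> S S'; rewrite !inE => /andP[HB _] /andP[HB' _] H.
  apply/setP => v; case: (boolP (v \in B)) => Hv.
    by rewrite (subsetP HB) // (subsetP HB').
  have := congr1 (fun F : {ffun 'I_(ndeg d) -> {set V}} => v \in F (degidx d v)) H.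
  by rewrite /= !ffunE !in_setI (CiP _ Hv) !andbT.
rewrite -(card_in_imset inj).
transitivity #|[set T : {ffun 'I_(ndeg d) -> {set V}} | [forall i, Fam i (T i)]]|; last first.
  rewrite (card_fam Fam); apply: eq_bigr => i _; rewrite -card_Ci -cards_draws.
  by apply: eq_card => T; rewrite inE -topredE.
apply: eq_card => T; apply/imsetP/idP.
  move=> [S]; rewrite inE => /andP[HB /eqP HS] ->; rewrite inE; apply/forallP => i.
  rewrite /Fam ffunE subsetIr /=; apply/eqP.
  have := cnt_split i HB; rewrite -kvofE HS => ->; by rewrite addKn.
rewrite inE => /forallP HT.
pose S := B :|: \bigcup_(i : 'I_(ndeg d)) T i.
have HB : B \subset S by apply: subsetUl.
have PhiS : Phi S = T.
  apply/ffunP => i; rewrite ffunE; apply/setP => v; rewrite !inE.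
  apply/idP/idP.
    move=> /andP[/orP[Hv|/bigcupP[j _ Hvj]] /andP[Hv' Hd]]; first by rewrite Hv in Hv'.
    have /andP[/subsetP Hs _] := HT j.
    have := Hs v Hvj; rewrite !inE => /andP[_]; rewrite degidxP => /eqP Ej.
    by move: Hd; rewrite degidxP Ej => /eqP <-.
  move=> Hv; have /andP[/subsetP Hs _] := HT i; have := Hs v Hv; rewrite inE => ->.
  by rewrite andbT; apply/orP; right; apply/bigcupP; exists i.
exists S => //; rewrite inE HB /=; apply/eqP/ffunP => i; apply: val_inj.
apply: etrans (kvofE S i) _; rewrite (cnt_split i HB).
have /andP[_ /eqP Hc] := HT i.
have -> : S :&: Ci i = T i by rewrite -PhiS ffunE.
by rewrite Hc subnKC.
Qed.

Local Open Scope ring_scope.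
Lemma group_deg (f : nat -> rat) (S : {set V}) :
  \prod_(v in ~: S) f (d v) = \prod_i f (di i) ^+ (acount i - cnt S i)%N.
Proof.
rewrite (partition_big (@degidx V d) xpredT) //=; apply: eq_bigr => i _.
rewrite (eq_bigr (fun _ => f (di i))); last first.
  by move=> v /andP[_ /eqP <-]; rewrite degi_idx.
rewrite -big_filter -big_filter big_filter_cond big_filter.
rewrite (eq_bigl (mem [set v in ~: S | d v == di i])); last first.
  by move=> v; rewrite !inE degidxP.
rewrite prodr_const; congr (_ ^+ _).
rewrite /acount /cnt -(cardsID S [set v | d v == di i]).
have -> : [set v | d v == di i] :&: S = [set v in S | d v == di i].
  by apply/setP => v; rewrite !inE andbC.
rewrite addKn; apply: eq_card => v; rewrite !inE andbC.
by [].
Qed.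
End Count.

Section Bound.
Variables (V : finType) (B : {set V}) (d : V -> nat).

Lemma acount_gt0 (i : 'I_(ndeg d)) : (0 < acount i)%N.
Proof.
have : degi i \in degs d by apply: mem_nth.
rewrite mem_undup => /mapP[v _ Hv]; apply/card_gt0P; exists v; by rewrite inE Hv.
Qed.

Lemma acount_le (i : 'I_(ndeg d)) : (acount i <= #|V|)%N.
Proof. exact: max_card. Qed.

Lemma acount_disj (i j : 'I_(ndeg d)) : i != j -> (acount i + acount j <= #|V|)%N.
Proof.
move=> Hij; rewrite /acount.
have E : [set v | d v == degi i] :&: [set v | d v == degi j] = set0.
  apply/setP => v; rewrite !inE !degidxP; case: eqP => // ->; by rewrite (negbTE Hij).
have := cardsU [set v | d v == degi i] [set v | d v == degi j].
rewrite E cards0 subn0 => <-; exact: max_card.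
Qed.

Lemma adm_le (k : nat) (kv : kvec d) i : admissible B k kv -> (kv i <= acount i)%N.
Proof. by move=> /andP[_ /forallP /(_ i) /andP[]]. Qed.

Lemma card_adm k : (#|[pred kv : kvec d | admissible B k kv]| <= #|V| ^ ndeg d)%N.
Proof.
case: (boolP [exists i : 'I_(ndeg d), acount i == #|V|]) => [/existsP[i /eqP Hi] | Hno].
  have allI (j : 'I_(ndeg d)) : j = i.
    apply/eqP; apply: contraT => Hji; have := acount_disj Hji.
    by rewrite Hi -{2}(add0n #|V|) leq_add2r leqNgt acount_gt0.
  have n0 : (0 < #|V|)%N by rewrite -Hi acount_gt0.
  apply: (@leq_trans 1).
    apply/card_le1_eqP => kv kv'; rewrite !inE => /andP[/eqP H1 _] /andP[/eqP H2 _].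
    have Hs (w : kvec d) : ksum w = w i.
      by rewrite /ksum (big_pred1 i) // => j; rewrite /= (allI j) eqxx.
    apply/ffunP => j; rewrite (allI j); apply: val_inj.
    apply: etrans (esym (Hs kv')) _; apply: etrans _ (Hs kv); by rewrite H1 H2.
  apply: (leq_trans n0); rewrite -{1}(expn1 #|V|); apply: leq_pexp2l => //.
  exact: (leq_ltn_trans (leq0n _) (ltn_ord i)).
have ltn (j : 'I_(ndeg d)) : (acount j < #|V|)%N.
  by rewrite ltn_neqAle acount_le andbT; apply: contraNneq Hno => H; apply/existsP; exists j; rewrite H.
pose h (kv : kvec d) : {ffun 'I_(ndeg d) -> 'I_(#|V|.-1.+1)} := [ffun j => inord (kv j)].
have inj : {in [pred kv : kvec d | admissible B k kv] &, injective h}.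
  move=> kv kv' H1 H2 Hh; apply/ffunP => j; apply: val_inj.
  have := congr1 (fun f : {ffun 'I_(ndeg d) -> 'I_(#|V|.-1.+1)} => val (f j)) Hh.
  rewrite /= !ffunE => Hv.
  have lt1 (w : kvec d) : admissible B k w -> (w j < #|V|.-1.+1)%N.
    move=> Hw; have h1 := leq_ltn_trans (adm_le j Hw) (ltn j).
    by rewrite prednK // (leq_ltn_trans (leq0n _) h1).
  by move: Hv; rewrite !inordK ?lt1.
apply: (leq_trans (leq_card_in _ _ inj)); rewrite card_ffun !card_ord.
case: (posnP #|V|) => [n0 | npos]; last by rewrite prednK.
suff -> : ndeg d = 0%N by rewrite n0.
apply/eqP; rewrite -leqn0 leqNgt; apply/negP => H.
by have := ltn (Ordinal H); rewrite n0.
Qed.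

Local Open Scope ring_scope.

Lemma prob_ge0 (P : pred (cfg V)) : 0 <= prob d P.
Proof. by rewrite /prob divr_ge0 ?ler0n. Qed.

Lemma acoef_ge0 (kv : kvec d) : 0 <= acoef B kv.
Proof.
rewrite /acoef mulr_ge0 //.
  apply: prodr_ge0 => i _; rewrite mulr_ge0 ?ler0n // exprn_ge0 // divr_ge0 ?ler0n //.
by rewrite /Rk; case: pickP => [S _|_]; rewrite ?prob_ge0.
Qed.

Lemma part2 k : alpha B d k <= (#|V|%:R) ^+ (ndeg d) * amax B d k.
Proof.
have amax0 : 0 <= amax B d k by apply: bigmax_ge_id.
apply: (@le_trans _ _ (\sum_(kv : kvec d | admissible B k kv) amax B d k)).
  by apply: ler_sum => kv Hkv; apply: le_bigmax_cond.
rewrite sumr_const -(mulr_natl (amax B d k)); apply: ler_wpM2r => //.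
rewrite -natrX ler_nat; exact: card_adm.
Qed.
End Bound.
Local Open Scope ring_scope.

Lemma part1 (V : finType) (B : {set V}) (d : V -> nat) (k : nat) :
  (forall v, d v <= #|V|)%N ->
  prob d (fun N => #|rr B N| == k) = alpha B d k.
Proof.
move=> dle.
rewrite (prob_part d (f := rr B) (Qj := fun S => #|S| == k)) //.
rewrite (eq_bigr _ (fun S _ => prob_rrS B dle S)).
rewrite -big_mkcondr /=.
rewrite (eq_bigl (fun S : {set V} => (B \subset S) && admissible B k (kvof d S))); last first.
  move=> S; case: (boolP (B \subset S)) => HB; last by rewrite andbF.
  by rewrite admissible_kvof // andbT.
rewrite (partition_big (kvof d) (admissible B k)) /=; last by move=> S /andP[].
apply: eq_bigr => kv Hkv.
rewrite (eq_bigl (fun S : {set V} => (B \subset S) && (kvof d S == kv))); last first.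
  move=> S; case: (boolP (B \subset S)) => //= HB.
  by case: eqP => [->|]; rewrite ?Hkv ?andbF.
pose P := \prod_i ((('C(#|V| - ksum kv, degi i))%:R / ('C(#|V|, degi i))%:R)
        ^+ (acount i - kv i)%N : rat).
rewrite (eq_bigr (fun _ => Rk B kv * P)); last first.
  move=> S /andP[HB /eqP HS].
  have Hc := has_counts_kvof d HB; rewrite HS in Hc.
  rewrite (Rk_eq Hc) probQ // (group_deg d (fun a => ('C(#|V| - #|S|, a))%:R / ('C(#|V|, a))%:R)).
  rewrite /P -HS ksum_kvof; congr (_ * _).
  apply: eq_bigr => i _; congr (_ ^+ _); by rewrite kvofE.
rewrite sumr_const.
have Ht : forall i, (tcount B i <= kv i)%N.
  by move=> i; move: Hkv => /andP[_ /forallP /(_ i) /andP[]].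
rewrite (_ : #|_| = #|[set S : {set V} | (B \subset S) && (kvof d S == kv)]|); last first.
  by apply: eq_card => S; rewrite inE.
rewrite card_Sset // /acoef big_split /= -natr_prod -/P.
by rewrite -[LHS]mulr_natl [Rk B kv * P]mulrC mulrA.
Qed.

Unset Implicit Arguments.

Theorem lemma3 (V : finType) (B : {set V}) (d : V -> nat) (dmin dmax : nat) :
  (1 <= dmin)%N ->
  (forall v, dmin <= d v <= dmax)%N ->
  (dmax <= #|V|)%N ->
  forall k : nat, (#|B| <= k <= #|V|)%N ->
    prob d (fun N => #|rr B N| == k) = alpha B d k /\
    alpha B d k <= (#|V|%:R) ^+ (ndeg d) * amax B d k.
Proof.
move=> _ Hd Hmax k _; split.
  apply: part1 => v; have /andP[_ h] := Hd v; exact: leq_trans h Hmax.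
exact: part2.
Qed.
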